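(* In the setting of the context, let $\lambda_2$ be the second largest singular value (counted with multiplicity) of $\mathcal B$. Then $$\lambda_2=\max\{\|\Im(B^*u)\|:\ u\in\mathbb C^n,\ \langle iu,x_0\rangle=0,\ \|u\|=1\}=\max\{\|\mathcal B^\top u\|:\ u\in\mathbb R^{2n},\ u\perp G(x_0),\ \|u\|=1\}.$$
   Context: $A^*\in\mathbb C^{N\times n}$ is isometric ($AA^*=I_n$), $N\ge2n$, $x_0\in\mathbb C^n$ with $\|x_0\|=1$, $B=A\,\mathrm{diag}\big(\frac{A^*x_0}{|A^*x_0|}\big)$ (componentwise quotient, convention $y(j)/|y(j)|=1$ if $y(j)=0$), $\mathcal B=\begin{bmatrix}\Re B\\ \Im B\end{bmatrix}\in\mathbb R^{2n\times N}$. $G(v):=\begin{bmatrix}\Re v\\ \Im v\end{bmatrix}$. The real inner product on $\mathbb C^n$ is $\langle u,v\rangle=\Re(u^*v)$; on $\mathbb R^{2n}$, $\perp$ means orthogonal for the dot product. *)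

(* Defs.v *)
From HB Require Import structures.
From mathcomp Require Import all_boot all_order all_algebra.
Set Implicit Arguments. Unset Strict Implicit. Unset Printing Implicit Defensive.
Import Order.TTheory GRing.Theory Num.Theory.
Local Open Scope ring_scope.

Section Defs.
Variable C : numClosedFieldType.

Definition vnorm m (v : 'cV[C]_m) : C := sqrtC (\sum_i `|v i 0| ^+ 2).

Definition adj m k (M : 'M[C]_(m, k)) : 'M[C]_(k, m) := map_mx Num.conj M^T.

Definition rdot m (u v : 'cV[C]_m) : C := 'Re ((adj u *m v) 0 0).

Definition phase (y : C) : C := if y == 0 then 1 else y / `|y|.

Definition Bmat n N (A : 'M[C]_(n, N)) (x0 : 'cV[C]_n) : 'M[C]_(n, N) :=
  A *m diag_mx (\row_j phase ((adj A *m x0) j 0)).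

Definition Re_mx m k (M : 'M[C]_(m, k)) : 'M[C]_(m, k) := map_mx (fun z => 'Re z) M.
Definition Im_mx m k (M : 'M[C]_(m, k)) : 'M[C]_(m, k) := map_mx (fun z => 'Im z) M.

Definition realify n k (B : 'M[C]_(n, k)) : 'M[C]_(n + n, k) := col_mx (Re_mx B) (Im_mx B).

Definition Gvec n (v : 'cV[C]_n) : 'cV[C]_(n + n) := realify v.

Definition sorted_eigenvalues m (M : 'M[C]_m) (s : seq C) : Prop :=
  char_poly M = \prod_(x <- s) ('X - x%:P) /\
  all (fun x => x \is Num.real) s /\
  sorted (fun a b => b <= a) s.

(* singular values of a real matrix M (m x k, m <= k), counted with
   multiplicity, in nonincreasing order: square roots of the sorted
   eigenvalues s of M M^T. *)
Definition singular_values (s : seq C) : seq C := map sqrtC s.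

End Defs.

(* Main.v *)
Require Import Defs.
From HB Require Import structures.
From mathcomp Require Import all_boot all_order all_algebra.
Import Order.TTheory GRing.Theory Num.Theory.
Local Open Scope ring_scope.
Set Implicit Arguments. Unset Strict Implicit. Unset Printing Implicit Defensive.
Section Generic.
Variable C : numClosedFieldType.

Definition nsq m (v : 'cV[C]_m) : C := \sum_i `|v i 0| ^+ 2.

Lemma nsq_ge0 m (v : 'cV[C]_m) : 0 <= nsq v.
Proof. by apply: sumr_ge0 => i _; rewrite exprn_ge0. Qed.

Lemma vnorm_sq m (v : 'cV[C]_m) : vnorm v ^+ 2 = nsq v.
Proof. exact: sqrtCK. Qed.

Lemma vnorm1 m (v : 'cV[C]_m) : (vnorm v = 1) <-> (nsq v = 1).
Proof.
split => h; first by rewrite -vnorm_sq h expr1n.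
by rewrite /vnorm -/(nsq v) h sqrtC1.
Qed.

Lemma nsq0_eq m (v : 'cV[C]_m) : nsq v = 0 -> v = 0.
Proof.
move=> /eqP; rewrite psumr_eq0 => [/allP h|i _]; last exact: exprn_ge0.
apply/matrixP => i j; rewrite (ord1 j) mxE.
by have := h i (mem_index_enum i); rewrite /= sqrf_eq0 normr_eq0 => /eqP.
Qed.

Lemma nsq0 m : nsq (0 : 'cV[C]_m) = 0.
Proof. by apply: big1 => i _; rewrite mxE normr0 expr0n. Qed.

Lemma adj_nsq m (v : 'cV[C]_m) : (adj v *m v) 0 0 = nsq v.
Proof. by rewrite mxE; apply: eq_bigr => i _; rewrite !mxE normCKC. Qed.

Lemma adjM m k p (X : 'M[C]_(m, k)) (Y : 'M[C]_(k, p)) :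
  adj (X *m Y) = adj Y *m adj X.
Proof. by rewrite /adj trmx_mul map_mxM. Qed.

Lemma adjK m k (X : 'M[C]_(m, k)) : adj (adj X) = X.
Proof. by apply/matrixP => i j; rewrite !mxE conjCK. Qed.

Lemma adjZ m k a (X : 'M[C]_(m, k)) : adj (a *: X) = a^* *: adj X.
Proof. by apply/matrixP => i j; rewrite !mxE rmorphM. Qed.

Lemma adjD m k (X Y : 'M[C]_(m, k)) : adj (X + Y) = adj X + adj Y.
Proof. by apply/matrixP => i j; rewrite !mxE rmorphD. Qed.

Lemma adj1 m : adj (1%:M : 'M[C]_m) = 1%:M.
Proof. by apply/matrixP => i j; rewrite !mxE rmorph_nat eq_sym. Qed.

Definition realm m k (X : 'M[C]_(m, k)) := forall i j, X i j \is Num.real.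

Lemma adj_real m k (X : 'M[C]_(m, k)) : realm X -> adj X = X^T.
Proof. by move=> h; apply/matrixP => i j; rewrite !mxE conj_Creal. Qed.

Lemma realmM m k p (X : 'M[C]_(m, k)) (Y : 'M[C]_(k, p)) :
  realm X -> realm Y -> realm (X *m Y).
Proof. by move=> hX hY i j; rewrite mxE; apply: rpred_sum => l _; rewrite rpredM. Qed.

Lemma realm_tr m k (X : 'M[C]_(m, k)) : realm X -> realm X^T.
Proof. by move=> h i j; rewrite mxE. Qed.

Lemma Re_mulmx m k (X : 'M[C]_(m, k)) (v : 'cV[C]_k) :
  realm X -> Re_mx (X *m v) = X *m Re_mx v.
Proof.
move=> h; apply/matrixP => i j; rewrite !mxE raddf_sum; apply: eq_bigr => l _.
by rewrite !mxE; apply: ReMl. Qed.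

Lemma Im_mulmx m k (X : 'M[C]_(m, k)) (v : 'cV[C]_k) :
  realm X -> Im_mx (X *m v) = X *m Im_mx v.
Proof.
move=> h; apply/matrixP => i j; rewrite !mxE raddf_sum; apply: eq_bigr => l _.
by rewrite !mxE; apply: ImMl. Qed.

Lemma Re_Im_mx m k (X : 'M[C]_(m, k)) : X = Re_mx X + 'i *: Im_mx X.
Proof. by apply/matrixP => i j; rewrite !mxE -Crect. Qed.

Lemma realm_Re m k (X : 'M[C]_(m, k)) : realm (Re_mx X).
Proof. by move=> i j; rewrite mxE Creal_Re. Qed.
Lemma realm_Im m k (X : 'M[C]_(m, k)) : realm (Im_mx X).
Proof. by move=> i j; rewrite mxE Creal_Im. Qed.

Lemma nsqZ m a (v : 'cV[C]_m) : nsq (a *: v) = `|a| ^+ 2 * nsq v.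
Proof. by rewrite /nsq mulr_sumr; apply: eq_bigr => i _; rewrite mxE normrM exprMn. Qed.

Lemma adj_entry m (a b : 'cV[C]_m) : (adj a *m b) 0 0 = \sum_k (a k 0)^* * b k 0.
Proof. by rewrite mxE; apply: eq_bigr => k _; rewrite !mxE. Qed.

Lemma col_entry m (F : 'I_m -> C) a b : (\col_k F k) a b = F a.
Proof. by rewrite mxE. Qed.
Lemma col_entry' m k a b : (\col_i ((i == k)%:R : C) : 'cV_m) a b = (a == k)%:R.
Proof. by rewrite mxE. Qed.

End Generic.

Section Spec.
Variable C : numClosedFieldType.
Variable m : nat.
Variable M : 'M[C]_m.
Hypothesis Mreal : realm M.
Hypothesis Mherm : adj M = M.

Definition P := spectralmx M.
Definition Pa := adj P.
Definition dv := spectral_diag M.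
Definition d i := dv 0 i.

Lemma M_hermsym : M \is hermsymmx.
Proof. by rewrite is_hermitianmxE expr0 scale1r; apply/eqP; rewrite -[LHS]Mherm. Qed.

Lemma PPa : P *m Pa = 1%:M.
Proof. exact/unitarymxP/spectral_unitarymx. Qed.

Lemma PaP : Pa *m P = 1%:M.
Proof.
have := mulVmx (spectral_unit M).
by rewrite invmx_unitary ?spectral_unitarymx.
Qed.

Lemma Mdec : M = Pa *m diag_mx dv *m P.
Proof.
have /orthomx_spectralP := hermitian_normalmx M_hermsym.
by rewrite invmx_unitary ?spectral_unitarymx.
Qed.

Lemma dreal i : d i \is Num.real.
Proof. exact: (mxOverP (hermitian_spectral_diag_real M_hermsym)). Qed.

Lemma q_expand (w : 'cV[C]_m) :
  (adj w *m M *m w) 0 0 = \sum_i d i * `|(P *m w) i 0| ^+ 2.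
Proof.
rewrite Mdec !mulmxA -mulmxA -[adj w *m Pa]adjM mul_mx_diag mxE.
by apply: eq_bigr => i _; rewrite !mxE normCKC mulrCA mulrA.
Qed.

Lemma nsqP (w : 'cV[C]_m) : nsq (P *m w) = nsq w.
Proof. by rewrite -!adj_nsq adjM mulmxA -[adj w *m Pa *m P]mulmxA PaP mulmx1. Qed.


Lemma Pa_eig (y : 'cV[C]_m) mu : diag_mx dv *m y = mu *: y ->
  M *m (Pa *m y) = mu *: (Pa *m y).
Proof.
move=> hy; rewrite Mdec -!mulmxA [P *m _]mulmxA PPa mul1mx hy.
by rewrite -scalemxAr.
Qed.

Lemma Pa_inj (y : 'cV[C]_m) : y != 0 -> Pa *m y != 0.
Proof. by apply: contraNneq => h; rewrite -[y]mul1mx -PPa -mulmxA h mulmx0. Qed.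

Lemma Re_mxZ k l mu (X : 'M[C]_(k, l)) : mu \is Num.real ->
  Re_mx (mu *: X) = mu *: Re_mx X.
Proof. by move=> h; apply/matrixP => i j; rewrite !mxE; apply: ReMl. Qed.

Lemma Im_mxZ k l mu (X : 'M[C]_(k, l)) : mu \is Num.real ->
  Im_mx (mu *: X) = mu *: Im_mx X.
Proof. by move=> h; apply/matrixP => i j; rewrite !mxE; apply: ImMl. Qed.

Lemma Re_mx0 k l : Re_mx (0 : 'M[C]_(k, l)) = 0.
Proof. by apply/matrixP => i j; rewrite !mxE raddf0. Qed.
Lemma Im_mx0 k l : Im_mx (0 : 'M[C]_(k, l)) = 0.
Proof. by apply/matrixP => i j; rewrite !mxE raddf0. Qed.

Lemma real_eig (g w : 'cV[C]_m) mu : realm g -> mu \is Num.real -> w != 0 ->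
  M *m w = mu *: w -> g^T *m w = 0 ->
  exists r : 'cV[C]_m, [/\ realm r, r != 0, M *m r = mu *: r & g^T *m r = 0].
Proof.
move=> hg hmu w0 hw gw.
have gT : realm g^T by exact: realm_tr.
have [re0|reN0] := eqVneq (Re_mx w) 0.
  have imN0 : Im_mx w != 0.
    apply: contraNneq w0 => im0; rewrite [w]Re_Im_mx re0 im0 scaler0 addr0 //.
  exists (Im_mx w); split => //; first exact: realm_Im.
    by rewrite -Im_mulmx // hw Im_mxZ.
  by rewrite -Im_mulmx // gw Im_mx0.
exists (Re_mx w); split => //; first exact: realm_Re.
  by rewrite -Re_mulmx // hw Re_mxZ.
by rewrite -Re_mulmx // gw Re_mx0.
Qed.

Lemma char_poly_M : char_poly M = \prod_(i < m) ('X - (d i)%:P).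
Proof.
have -> : char_poly M = char_poly (diag_mx dv).
  rewrite /char_poly /char_poly_mx {1}Mdec !map_mxM.
  set pa := map_mx _ Pa; set pp := map_mx _ P; set D := map_mx _ (diag_mx dv).
  have hpp : pa *m pp = 1%:M by rewrite -map_mxM PaP map_mx1.
  have hpp' : pp *m pa = 1%:M by rewrite -map_mxM PPa map_mx1.
  have hX : 'X%:M = pa *m 'X%:M *m pp :> 'M_m.
    by rewrite -mulmxA -scalar_mxC mulmxA hpp mul1mx.
  rewrite {1}hX -mulmxBl -mulmxBr !det_mulmx mulrC mulrA -det_mulmx hpp' det1 mul1r //.
rewrite char_poly_trig ?diag_mx_is_trig //.
by apply: eq_bigr => i _; rewrite mxE eqxx mulr1n.
Qed.

Variable g : 'cV[C]_m.
Hypothesis greal : realm g.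
Hypothesis gnorm : nsq g = 1.
Hypothesis Mg : M *m g = g.
Hypothesis Mbound : forall u, realm u -> (adj u *m M *m u) 0 0 <= nsq u.

Definition h := P *m g.

Lemma Dh : diag_mx dv *m h = h.
Proof.
have := congr1 (mulmx P) Mg; rewrite {1}Mdec !mulmxA PPa mul1mx.
by rewrite -mulmxA.
Qed.

Lemma h_eig k : h k 0 != 0 -> d k = 1.
Proof.
move=> hk; have /matrixP /(_ k 0) := Dh; rewrite mul_diag_mx mxE => e.
by apply: (mulIf hk); rewrite mul1r.
Qed.

Lemma nsq_h : nsq h = 1.
Proof. by rewrite /h nsqP. Qed.

Lemma h_nz : exists k, h k 0 != 0.
Proof.
apply/existsP; apply: contraT; rewrite negb_exists => /forallP hk.
have : h = 0.
  apply/matrixP => i j; rewrite (ord1 j) [RHS]mxE; apply/eqP.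
  by move: (hk i); rewrite negbK.
by move=> h0; move: nsq_h; rewrite h0 nsq0 => /eqP; rewrite eq_sym oner_eq0.
Qed.

Definition ev k : 'cV[C]_m := \col_i (i == k)%:R.

Lemma D_ev k : diag_mx dv *m ev k = d k *: ev k.
Proof.
apply/matrixP => i j; rewrite mul_diag_mx !mxE.
by case: eqP => [->|_]; rewrite ?mulr1 ?mulr0.
Qed.

Lemma ev_nz k : ev k != 0.
Proof. by apply/eqP => /matrixP /(_ k 0); rewrite !mxE eqxx => /eqP; rewrite oner_eq0. Qed.

Lemma q_eig (r : 'cV[C]_m) mu : M *m r = mu *: r -> (adj r *m M *m r) 0 0 = mu * nsq r.
Proof. by move=> hr; rewrite -mulmxA hr -scalemxAr mxE adj_nsq. Qed.

Lemma nsq_gt0 (r : 'cV[C]_m) : r != 0 -> 0 < nsq r.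
Proof.
move=> r0; rewrite lt_def nsq_ge0 andbT; apply/eqP => e.
by move: r0; rewrite (nsq0_eq e) eqxx.
Qed.

Lemma d_le1 k : d k <= 1.
Proof.
have := Pa_eig (D_ev k); have := Pa_inj (ev_nz k) => w0 hw.
have z0 : realm (0 : 'cV[C]_m) by move=> i j; rewrite mxE rpred0.
have z0T : (0 : 'cV[C]_m)^T *m (Pa *m ev k) = 0 by rewrite trmx0 mul0mx.
have [r [rr r0 hr _]] := real_eig z0 (dreal k) w0 hw z0T.
have := Mbound rr; rewrite (q_eig hr) -{2}[nsq r]mul1r ler_pM2r //.
exact: nsq_gt0.
Qed.


Variable s : seq C.
Hypothesis hs : sorted_eigenvalues M s.
Hypothesis m2 : (1 < m)%N.

Lemma s_perm : perm_eq s (map d (enum 'I_m)).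
Proof.
apply: prod_XsubC_eq; rewrite -hs.1 char_poly_M big_map big_enum /=.
by apply: eq_bigl => i; rewrite inE.
Qed.

Lemma ge_trans : transitive (fun a b : C => b <= a).
Proof. by move=> y x z hxy hyz; exact: le_trans hyz hxy. Qed.

Lemma s_info : exists s0 s1 t i0 i1,
  [/\ s = s0 :: s1 :: t, d i0 = s0, d i1 = s1, i1 != i0 &
      s0 = 1 /\ forall i, i != i0 -> d i <= s1].
Proof.
have hp := s_perm.
have hsz : size s = m by rewrite (perm_size hp) size_map size_enum_ord.
have [_ [_ hsort]] := hs.
move: hp hsz hsort; case: s => [|s0 [|s1 t]] //=; first by move=> _ e; exfalso; move: m2; rewrite -e.
  by move=> _ e; exfalso; move: m2; rewrite -e.
move=> hp _ /andP [h01 hpt].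
have hall0 : all (fun b => b <= s0) (s1 :: t).
  by apply: (order_path_min ge_trans); rewrite /= h01.
have hall1 : all (fun b => b <= s1) t by apply: (order_path_min ge_trans).
have : s0 \in map d (enum 'I_m) by rewrite -(perm_mem hp) mem_head.
case/mapP => i0 _ e0.
have hp2 : perm_eq (s1 :: t) (map d (rem i0 (enum 'I_m))).
  rewrite -(perm_cons s0); apply: (perm_trans hp); rewrite e0 -map_cons.
  by apply: perm_map; apply: perm_to_rem; rewrite mem_enum.
have : s1 \in map d (rem i0 (enum 'I_m)) by rewrite -(perm_mem hp2) mem_head.
case/mapP => i1; rewrite (mem_rem_uniq _ (enum_uniq _)) inE => /andP [ne10 _] e1.
exists s0, s1, t, i0, i1; split; [by []|by rewrite e0|by rewrite e1|by []|].
split.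
  have [k hk] := h_nz; have dk := h_eig hk.
  apply/le_anti/andP; split; first by rewrite e0 d_le1.
  have : d k \in s0 :: s1 :: t by rewrite (perm_mem hp) map_f ?mem_enum.
  rewrite -dk in_cons => /orP [/eqP <- //|hin].
  by have /allP := hall0; apply.
move=> i ni.
have : d i \in s1 :: t.
  by rewrite (perm_mem hp2) map_f // (mem_rem_uniq _ (enum_uniq _)) inE ni mem_enum.
rewrite in_cons => /orP [/eqP -> //|hin].
by have /allP := hall1; apply.
Qed.


Lemma adj_h : adj h = adj g *m Pa.
Proof. by rewrite /h adjM. Qed.

Lemma ortho_real (u : 'cV[C]_m) : realm u ->
  (u^T *m g) 0 0 = (adj g *m u) 0 0.
Proof.
move=> ur; rewrite adj_real // !mxE; apply: eq_bigr => i _; rewrite !mxE mulrC.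
by [].
Qed.

Lemma upper (u : 'cV[C]_m) : realm u -> (u^T *m g) 0 0 = 0 -> nsq u = 1 ->
  forall s1, s`_1 = s1 -> (adj u *m M *m u) 0 0 <= s1.
Proof.
move=> ur ug un s1' es1.
have [s0 [s1 [t [i0 [i1 [es di0 di1 ne10 [s01 hle]]]]]]] := s_info.
have {s1' es1} -> : s1' = s1 by rewrite -es1 es.
rewrite q_expand; set y := P *m u.
have ny : nsq y = 1 by rewrite /y nsqP.
have hy : (adj h *m y) 0 0 = 0.
  by rewrite adj_h /y mulmxA -[adj g *m Pa *m P]mulmxA PaP mulmx1 -ortho_real.
suff : \sum_i d i * `|y i 0| ^+ 2 <= \sum_i s1 * `|y i 0| ^+ 2.
  by rewrite -mulr_sumr -/(nsq y) ny mulr1.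
apply: ler_sum => i _.
have [->|ni] := eqVneq i i0; last by rewrite ler_wpM2r ?exprn_ge0 ?hle.
have [e1|n1] := eqVneq s1 1; first by rewrite di0 s01 e1.
suff -> : y i0 0 = 0 by rewrite normr0 expr0n /= !mulr0.
have hk : forall k, k != i0 -> h k 0 = 0.
  move=> k nk; apply/eqP; apply: contraNT n1 => hk.
  have dk := h_eig hk; apply/eqP/le_anti/andP; split.
    by rewrite -di1 d_le1.
  by rewrite -dk hle.
have hi0 : h i0 0 != 0.
  have [k hkk] := h_nz; have [ek|nk] := eqVneq k i0; first by rewrite -ek.
  by move: hkk; rewrite hk // eqxx.
move: hy; rewrite adj_entry (bigD1 i0) //= big1 ?addr0 => [|k nk]; last first.
  by rewrite hk // conjC0 mul0r.
move=> /eqP; rewrite mulf_eq0 conjC_eq0 (negPf hi0) /= => /eqP.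
by [].
Qed.


Lemma Dy_entry (y : 'cV[C]_m) a : (diag_mx dv *m y) a 0 = d a * y a 0.
Proof. by rewrite mul_diag_mx mxE. Qed.

Lemma lower : exists u : 'cV[C]_m, [/\ realm u, (u^T *m g) 0 0 = 0, nsq u = 1 &
  (adj u *m M *m u) 0 0 = s`_1].
Proof.
have [s0 [s1 [t [i0 [i1 [es di0 di1 ne10 [s01 hle]]]]]]] := s_info.
have -> : s`_1 = s1 by rewrite es.
have [y [yD y0 yh]] : exists y : 'cV[C]_m,
    [/\ diag_mx dv *m y = s1 *: y, y != 0 & adj h *m y = 0].
  have [h1|h1] := eqVneq (h i1 0) 0.
    exists (ev i1); split; first by rewrite D_ev di1.
      exact: ev_nz.
    apply/matrixP => a b; rewrite !ord1 [RHS]mxE adj_entry (bigD1 i1) //= big1.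
      by rewrite h1 conjC0 mul0r addr0.
    by move=> k nk; rewrite col_entry' (negPf nk) mulr0.
  have d1 : d i1 = 1 := h_eig h1.
  exists (\col_k (if k == i0 then (h i1 0)^* else if k == i1 then - (h i0 0)^* else 0)).
  split.
  - apply/matrixP => a b; rewrite (ord1 b) Dy_entry [RHS]mxE !col_entry.
    case: eqP => [->|_]; first by rewrite di0 s01 -d1 di1.
    by case: eqP => [->|_]; rewrite ?mulr0 // di1.
  - apply/eqP => /matrixP /(_ i0 0); rewrite col_entry [RHS]mxE eqxx => /eqP.
    by rewrite conjC_eq0 (negPf h1).
  - apply/matrixP => a b; rewrite !ord1 [RHS]mxE adj_entry (bigD1 i0) //=.
    rewrite (bigD1 i1) //= big1 => [|k /andP [nk0 nk1]]; last first.
      by rewrite col_entry (negPf nk0) (negPf nk1) mulr0.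
    by rewrite !col_entry eqxx (negPf ne10) eqxx addr0 mulrN mulrC subrr.
have w0 := Pa_inj y0; have hw := Pa_eig yD.
have gw : g^T *m (Pa *m y) = 0.
  by rewrite -adj_real // mulmxA -adj_h.
have s1r : s1 \is Num.real by rewrite -di1 dreal.
have [r [rr r0 hr gr]] := real_eig greal s1r w0 hw gw.
have npos := nsq_gt0 r0.
set c := (sqrtC (nsq r))^-1.
have cr : c \is Num.real by rewrite rpredV sqrtC_real // nsq_ge0.
have c0 : 0 <= c by rewrite invr_ge0 sqrtC_ge0 nsq_ge0.
exists (c *: r); split.
- by move=> i j; rewrite mxE rpredM.
- by rewrite ortho_real; [rewrite adj_real // -scalemxAr gr scaler0 mxE|
     move=> i j; rewrite mxE rpredM].
- rewrite nsqZ ger0_norm // exprVn sqrtCK mulVf //.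
  by rewrite gt_eqF.
- rewrite (@q_eig _ s1); first by rewrite nsqZ ger0_norm // exprVn sqrtCK mulVf ?mulr1 // gt_eqF.
  by rewrite -scalemxAr hr !scalerA mulrC.
Qed.


Lemma exists_sorted : exists s, sorted_eigenvalues M s.
Proof.
set r := map d (enum 'I_m).
exists (sort (fun a b : C => b <= a) r); split; [|split].
- rewrite char_poly_M (perm_big _ (permEl (perm_sort _ _))) big_map big_enum /=.
  by apply: eq_bigl => i; rewrite inE.
- rewrite (perm_all _ (permEl (perm_sort _ _))); apply/allP => x /mapP [i _ ->]; exact: dreal.
- apply: (@sort_sorted_in _ (fun x : C => x \is Num.real)).
    by move=> x y xr yr; rewrite /total real_leVge.
  by apply/allP => x /mapP [i _ ->]; exact: dreal.
Qed.

End Spec.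

Section App.
Variable C : numClosedFieldType.

Lemma realm_col k l p (X : 'M[C]_(k, p)) (Y : 'M[C]_(l, p)) :
  realm X -> realm Y -> realm (col_mx X Y).
Proof.
move=> hX hY i j; rewrite -[i]splitK; case: (split i) => a; by rewrite /= ?col_mxEu ?col_mxEd.
Qed.

Lemma realm_realify k l (X : 'M[C]_(k, l)) : realm (realify X).
Proof. exact: realm_col (realm_Re _) (realm_Im _). Qed.

Lemma Re_mulmxr k l p (X : 'M[C]_(k, l)) (w : 'M[C]_(l, p)) :
  realm w -> Re_mx (X *m w) = Re_mx X *m w.
Proof.
move=> h; apply/matrixP => i j; rewrite !mxE raddf_sum; apply: eq_bigr => a _.
by rewrite !mxE; apply: ReMr.
Qed.

Lemma Im_mulmxr k l p (X : 'M[C]_(k, l)) (w : 'M[C]_(l, p)) :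
  realm w -> Im_mx (X *m w) = Im_mx X *m w.
Proof.
move=> h; apply/matrixP => i j; rewrite !mxE raddf_sum; apply: eq_bigr => a _.
by rewrite !mxE; apply: ImMr.
Qed.

Lemma realify_mulr k l (X : 'M[C]_(k, l)) (w : 'cV[C]_l) :
  realm w -> realify X *m w = Gvec (X *m w).
Proof.
by move=> h; rewrite /Gvec /realify mul_col_mx Re_mulmxr // Im_mulmxr.
Qed.

Lemma GvecE k (X : 'M[C]_(k, 1)) : Gvec X = col_mx (Re_mx X) (Im_mx X).
Proof. by []. Qed.

Lemma key k l (X : 'M[C]_(k, l)) (v : 'cV[C]_k) :
  (realify X)^T *m Gvec v = Re_mx (adj X *m v).
Proof.
rewrite /realify GvecE tr_col_mx mul_row_col.
apply/matrixP => i j; rewrite !mxE raddf_sum -big_split /=.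
apply: eq_bigr => a _; rewrite !mxE ReM Re_conj Im_conj.
by rewrite mulNr opprK.
Qed.

Lemma nsq_split k (v : 'cV[C]_(k + k)) :
  nsq v = nsq (usubmx v) + nsq (dsubmx v).
Proof. by rewrite /nsq big_split_ord /=; congr (_ + _); apply: eq_bigr => i _; rewrite mxE. Qed.

Lemma nsq_Gvec k (v : 'cV[C]_k) : nsq (Gvec v) = nsq v.
Proof.
rewrite nsq_split GvecE col_mxKu col_mxKd /nsq -big_split /=.
apply: eq_bigr => i _; rewrite !mxE (normC_Re_Im (v i 0)) sqrtCK.
by rewrite !real_normK ?Creal_Re ?Creal_Im.
Qed.

Lemma real_Gvec k (u : 'cV[C]_(k + k)) : realm u ->
  u = Gvec (usubmx u + 'i *: dsubmx u).
Proof.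
move=> h; rewrite GvecE -[LHS]vsubmxK; congr col_mx; apply/matrixP => i j; rewrite !mxE.
  by rewrite Re_rect.
by rewrite Im_rect.
Qed.

Lemma nsq_Re k (z : 'cV[C]_k) : nsq (Re_mx z) <= nsq z.
Proof.
apply: ler_sum => i _; rewrite mxE real_normK ?Creal_Re //.
by rewrite (normC_Re_Im (z i 0)) sqrtCK lerDl -real_normK ?Creal_Im // exprn_ge0.
Qed.

Lemma phase_norm (y : C) : `|phase y| = 1.
Proof.
rewrite /phase; case: eqP => [_|/eqP y0]; first by rewrite normr1.
by rewrite normrM normrV ?unitfE ?normr_eq0 // normr_id mulfV // normr_eq0.
Qed.

Lemma phase_mul (y : C) : (phase y)^* * y = `|y|.
Proof.
rewrite /phase; case: eqP => [->|/eqP y0]; first by rewrite mulr0 normr0.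
rewrite rmorphM fmorphV /= (conj_Creal (normr_real y)) mulrAC -normCKC expr2 mulfK //.
by rewrite normr_eq0.
Qed.


Variables (n N : nat) (A : 'M[C]_(n, N)) (x0 : 'cV[C]_n).
Hypothesis hA : A *m adj A = 1%:M.
Hypothesis hx0 : vnorm x0 = 1.

Local Notation B := (Bmat A x0).
Local Notation cB := (realify (Bmat A x0)).
Local Notation Mx := (cB *m cB^T).
Local Notation g := (Gvec x0).

Lemma cB_real : realm cB. Proof. exact: realm_realify. Qed.

Lemma Mx_real : realm Mx.
Proof. by apply: realmM; [exact: cB_real|exact/realm_tr/cB_real]. Qed.

Lemma Mx_herm : adj Mx = Mx.
Proof. by rewrite adjM !adj_real ?trmxK //; [exact: cB_real|exact/realm_tr/cB_real]. Qed.

Definition Dph := diag_mx (\row_j phase ((adj A *m x0) j 0)).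

Lemma DD : Dph *m adj Dph = 1%:M.
Proof.
apply/matrixP => i j; rewrite mul_diag_mx !mxE.
case: eqP => [->|/eqP ne]; last by rewrite eq_sym (negPf ne) /= !mulr0n conjC0 mulr0.
by rewrite eqxx !mulr1n -normCK phase_norm expr1n.
Qed.

Lemma BB : B *m adj B = 1%:M.
Proof.
by rewrite /Bmat -/Dph adjM mulmxA -[A *m Dph *m _]mulmxA DD mulmx1 hA.
Qed.

Lemma nsq_adjB (v : 'cV[C]_n) : nsq (adj B *m v) = nsq v.
Proof.
by rewrite -!adj_nsq adjM adjK mulmxA -[adj v *m B *m _]mulmxA BB mulmx1.
Qed.

Lemma adj_diag k (e : 'rV[C]_k) : adj (diag_mx e) = diag_mx (map_mx Num.conj e).
Proof.
apply/matrixP => i j; rewrite !mxE eq_sym.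
by case: eqP => [->|_]; rewrite ?mulr1n ?mulr0n ?conjC0.
Qed.

Lemma adjBx0 : adj B *m x0 = \col_j `|(adj A *m x0) j 0|.
Proof.
rewrite /Bmat -/Dph adjM -mulmxA /Dph adj_diag mul_diag_mx.
by apply/matrixP => i j; rewrite (ord1 j) !mxE -phase_mul.
Qed.


Lemma Re_mx_real k l (X : 'M[C]_(k, l)) : realm X -> Re_mx X = X.
Proof. by move=> h; apply/matrixP => i j; rewrite mxE; apply/Creal_ReP. Qed.

Lemma adjBx0_real : realm (adj B *m x0).
Proof. by rewrite adjBx0 => i j; rewrite mxE normr_real. Qed.

Lemma Mg : Mx *m g = g.
Proof.
rewrite -mulmxA key Re_mx_real; last exact: adjBx0_real.
by rewrite realify_mulr ?mulmxA ?BB ?mul1mx //; exact: adjBx0_real.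
Qed.

Lemma nsq_g : nsq g = 1.
Proof. by rewrite nsq_Gvec; apply/vnorm1. Qed.

Lemma q_cB (u : 'cV[C]_(n + n)) : (adj u *m Mx *m u) 0 0 = nsq (cB^T *m u).
Proof.
rewrite -adj_nsq adjM [adj cB^T]adj_real ?trmxK ?mulmxA //.
exact/realm_tr/cB_real.
Qed.

Lemma Mbound (u : 'cV[C]_(n + n)) : realm u -> (adj u *m Mx *m u) 0 0 <= nsq u.
Proof.
move=> ur; rewrite q_cB {1 2}(real_Gvec ur) key nsq_Gvec.
by rewrite -[X in _ <= X](nsq_adjB) nsq_Re.
Qed.

Lemma n_gt1 : (1 < n + n)%N.
Proof.
case En: n => [|k]; last by rewrite addSn addnS.
have := (vnorm1 x0).1 hx0; rewrite /nsq big1 => [/eqP|i _].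
  by rewrite eq_sym oner_eq0.
by move: (ltn_ord i); rewrite {2}En.
Qed.


Lemma rdot_G (v w : 'cV[C]_n) : rdot v w = ((Gvec v)^T *m Gvec w) 0 0.
Proof.
rewrite /rdot adj_entry raddf_sum !GvecE tr_col_mx mul_row_col !mxE -big_split /=.
apply: eq_bigr => a _; rewrite !mxE ReM Re_conj Im_conj.
by rewrite mulNr opprK.
Qed.

Lemma rdotN (v w : 'cV[C]_n) : rdot (- v) w = - rdot v w.
Proof.
rewrite /rdot -scaleN1r adjZ -scalemxAl mxE conjCN1 mulN1r.
by rewrite raddfN.
Qed.

Lemma Im_to_G (u : 'cV[C]_n) : Im_mx (adj B *m u) = cB^T *m Gvec (- 'i *: u).
Proof.
rewrite key -scalemxAr; apply/matrixP => i j; rewrite !mxE mulNr raddfN /=.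
by rewrite ReMil opprK.
Qed.

Lemma nsq_unit k (a : C) (v : 'cV[C]_k) : `|a| = 1 -> nsq (a *: v) = nsq v.
Proof. by move=> h; rewrite nsqZ h expr1n mul1r. Qed.

End App.

Unset Implicit Arguments.
Set Strict Implicit.

Theorem mainTheorem7 (C : numClosedFieldType) (n N : nat)
    (A : 'M[C]_(n, N)) (x0 : 'cV[C]_n)
    (hN : (2 * n <= N)%N)
    (hA : A *m adj A = 1%:M)
    (hx0 : vnorm x0 = 1) :
  let B := Bmat A x0 in
  let cB := realify B in
  (exists s, sorted_eigenvalues (cB *m cB^T) s) /\
  forall s, sorted_eigenvalues (cB *m cB^T) s ->
  let lambda2 := (singular_values s)`_1 in
  ((exists u : 'cV[C]_n, rdot ('i *: u) x0 = 0 /\ vnorm u = 1 /\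
       vnorm (Im_mx (adj B *m u)) = lambda2) /\
   (forall u : 'cV[C]_n, rdot ('i *: u) x0 = 0 -> vnorm u = 1 ->
       vnorm (Im_mx (adj B *m u)) <= lambda2)) /\
  ((exists u : 'cV[C]_(n + n), (forall i, u i 0 \is Num.real) /\
       (u^T *m Gvec x0) 0 0 = 0 /\ vnorm u = 1 /\
       vnorm (cB^T *m u) = lambda2) /\
   (forall u : 'cV[C]_(n + n), (forall i, u i 0 \is Num.real) ->
       (u^T *m Gvec x0) 0 0 = 0 -> vnorm u = 1 ->
       vnorm (cB^T *m u) <= lambda2)).
Proof.
move=> B cB.
have Mr := Mx_real A x0; have Mh := Mx_herm A x0.
have gr : realm (Gvec x0) := realm_realify x0.
have gn := nsq_g hx0.
have Mgg := Mg x0 hA.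
have Mb := Mbound x0 hA.
have m2 := n_gt1 hx0.
split; first exact: exists_sorted Mh.
move=> s hs lambda2.
have hsz : size s = (n + n)%N.
  by rewrite (perm_size (s_perm Mh hs)) size_map size_enum_ord.
have hl : lambda2 = sqrtC s`_1.
  by rewrite /lambda2 /singular_values (nth_map 0) ?hsz.
have [u [ur ug un uq]] := lower Mr Mh gr gn Mgg Mb hs m2.
have vB : forall w, vnorm (cB^T *m w) = sqrtC ((adj w *m (cB *m cB^T) *m w) 0 0).
  by move=> w; rewrite q_cB.
have up : forall w, realm w -> (w^T *m Gvec x0) 0 0 = 0 -> nsq w = 1 ->
    vnorm (cB^T *m w) <= lambda2.
  move=> w wr wg wn; rewrite vB hl ler_sqrtC.
  - exact: (upper Mr Mh gr gn Mgg Mb hs m2 wr wg wn (erefl _)).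
  - by rewrite nnegrE q_cB nsq_ge0.
  - by rewrite nnegrE -uq q_cB nsq_ge0.
split; split.
- set v := usubmx u + 'i *: dsubmx u.
  have uv : u = Gvec v := real_Gvec ur.
  have ii : - 'i * 'i = 1 :> C by rewrite mulNr -expr2 sqrCi opprK.
  exists ('i *: v); split; [|split].
  + rewrite scalerA -expr2 sqrCi scaleN1r rdotN rdot_G -uv ug oppr0 //.
  + by apply/vnorm1; rewrite nsq_unit ?normCi // -nsq_Gvec -uv.
  + by rewrite Im_to_G scalerA ii scale1r -uv vB uq hl.
- move=> w wo wn; rewrite Im_to_G; apply: up.
  + exact: realm_realify.
  + by rewrite -rdot_G scaleNr rdotN wo oppr0.
  + by rewrite nsq_Gvec nsq_unit ?normrN ?normCi //; apply/vnorm1.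
- exists u; split; [by move=> i; apply: ur|split; [by []|split]].
  + exact/vnorm1.
  + by rewrite vB uq hl.
- move=> w wr wg wn; apply: up => //; last exact/vnorm1.
  by move=> i j; rewrite (ord1 j); apply: wr.
Qed.
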